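(* Let $d\ge2$. For any feed-forward neural network architecture $\mathcal{A}$ with $d$ input neurons and the Heaviside activation $\sigma(x)=\mathds{1}_{x\ge0}$, the set $H_{\mathcal{A}}$ satisfies \[ \sup_{f \in \mathcal{M}^d} \inf_{g \in H_{\mathcal{A}}} \|f - g\|_{\infty} \geq \frac{1}{2}, \] where $\|\cdot\|_\infty$ is the sup norm on $[0,1]^d$.
   Context: $\mathcal{M}^d$ is the set of all functions $f:[0,1]^d\to[0,1]$ that are non-decreasing in the sense that $x_i\le y_i$ for all $i=1,\dots,d$ implies $f(x)\le f(y)$. A feed-forward architecture $\mathcal{A}$ is a directed acyclic graph with $d$ input nodes (in-degree $0$), a single output node (out-degree $0$), skip connections allowed; a real weight is attached to every edge and every non-input node. For weights $\mathbf w$, input neuron $v$ outputs $x_v$, each hidden neuron outputs $\sigma(\sum_{u\in P_v}w_{u\to v}y_u+w_v)$ ($P_v$ = predecessors), the output neuron outputs $\sum_{u\in P_v}w_{u\to v}y_u+w_v$; $H_{\mathcal{A}}$ is the set of all functions on $[0,1]^d$ so computed over all weight vectors. *)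

(* Defs.v *)
From HB Require Import structures.
From mathcomp Require Import all_boot all_order all_algebra.
From mathcomp Require Import all_classical all_reals all_analysis.
Set Implicit Arguments. Unset Strict Implicit. Unset Printing Implicit Defensive.
Import Order.TTheory GRing.Theory Num.Theory.
Local Open Scope ring_scope.
Local Open Scope classical_set_scope.

Definition heaviside (R : realType) (t : R) : R := if 0 <= t then 1 else 0.

(* A feed-forward architecture with d inputs, given in topological order:
   nodes are 0, ..., n-1; nodes 0..d-1 are the input nodes, node n-1 is the
   output node, nodes d..n-2 are hidden.  Edges (skip connections allowed)
   are given by the relation [edge]; an edge u -> v forces u < v < n
   (acyclicity), input nodes have in-degree 0, and the output node has
   out-degree 0 (automatic from u < v < n). *)
Record architecture (d : nat) := Architecture {
  nnodes : nat;
  edge : rel nat;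
  edge_order : forall u v, edge u v -> (u < v)%N && (v < nnodes)%N;
  edge_noninput : forall u v, edge u v -> (d <= v)%N;
  output_noninput : (d < nnodes)%N
}.

Definition cube (R : realType) (d : nat) : set ('I_d -> R) :=
  [set x | forall i, 0 <= x i <= 1].

Section Network.
Variables (R : realType) (d : nat) (A : architecture d).
Variables (w : nat -> nat -> R)
          (b : nat -> R)
          (x : 'I_d -> R).

(* output of node k given the outputs [s] of nodes 0..k-1 *)
Definition node_value (k : nat) (s : seq R) : R :=
  match (insub k : option 'I_d) with
  | Some i => x i
  | None =>
    let pre := \sum_(j < k | edge A j k) w j k * nth 0 s j + b k in
    if k == (nnodes A).-1 then pre else heaviside pre
  end.

Fixpoint node_outputs (k : nat) : seq R :=
  match k with
  | 0 => [::]
  | k'.+1 => let s := node_outputs k' in rcons s (node_value k' s)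
  end.

Definition network_output : R := nth 0 (node_outputs (nnodes A)) (nnodes A).-1.
End Network.

Definition H_A (R : realType) (d : nat) (A : architecture d) : set (('I_d -> R) -> R) :=
  [set g | exists (w : nat -> nat -> R) (b : nat -> R),
           g = fun x => network_output A w b x].

(* M^d : non-decreasing functions [0,1]^d -> [0,1] (values off the cube are
   irrelevant) *)
Definition monotone_cube (R : realType) (d : nat) : set (('I_d -> R) -> R) :=
  [set f | (forall x, cube x -> 0 <= f x <= 1) /\
           (forall x y, cube x -> cube y -> (forall i, x i <= y i) -> f x <= f y)].

Definition supnorm_cube (R : realType) (d : nat) (f g : ('I_d -> R) -> R) : \bar R :=
  ereal_sup [set (`|f x - g x|)%:E | x in cube (R:=R) (d:=d)].

(* Main.v *)
Require Import Defs.
From mathcomp Require Import all_boot all_order all_algebra.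
From mathcomp Require Import all_classical all_reals all_analysis.
From mathcomp Require Import lra.
Set Implicit Arguments. Unset Strict Implicit. Unset Printing Implicit Defensive.
Import Order.TTheory GRing.Theory Num.Theory.
Local Open Scope ring_scope.
Local Open Scope classical_set_scope.

Definition nv (R : realType) d (A : architecture d) (w : nat -> nat -> R) (b : nat -> R) (x : 'I_d -> R) (j : nat) : R :=
  nth 0 (node_outputs A w b x j.+1) j.

Lemma size_no (R : realType) d (A : architecture d) (w : nat -> nat -> R) (b : nat -> R) (x : 'I_d -> R) k :
  size (node_outputs A w b x k) = k.
Proof. by elim: k => //= k IH; rewrite size_rcons IH. Qed.

Lemma nth_no (R : realType) d (A : architecture d) (w : nat -> nat -> R) (b : nat -> R) (x : 'I_d -> R) k j :
  (j < k)%N -> nth 0 (node_outputs A w b x k) j = nv A w b x j.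
Proof.
elim: k => // k IH; rewrite ltnS leq_eqVlt => /orP [/eqP -> //|hj].
by rewrite /= nth_rcons size_no hj IH.
Qed.

Lemma nv_def (R : realType) d (A : architecture d) (w : nat -> nat -> R) (b : nat -> R) (x : 'I_d -> R) j :
  nv A w b x j = node_value A w b x j (node_outputs A w b x j).
Proof. by rewrite /nv /= nth_rcons size_no ltnn eqxx. Qed.

Lemma nv_input (R : realType) d (A : architecture d) (w : nat -> nat -> R) (b : nat -> R) (x : 'I_d -> R) j (hj : (j < d)%N) :
  nv A w b x j = x (Ordinal hj).
Proof.
rewrite nv_def /node_value insubT /=; congr (x _); exact: val_inj.
Qed.

Definition pre (R : realType) d (A : architecture d) (w : nat -> nat -> R) (b : nat -> R) (x : 'I_d -> R) k : R :=
  \sum_(j < k | edge A j k) w j k * nv A w b x j + b k.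

Lemma nv_hidden (R : realType) d (A : architecture d) (w : nat -> nat -> R) (b : nat -> R) (x : 'I_d -> R) k :
  (d <= k)%N -> nv A w b x k =
   if k == (nnodes A).-1 then pre A w b x k else heaviside (pre A w b x k).
Proof.
move=> hk; rewrite nv_def /node_value insubF; last by rewrite ltnNge hk.
suff -> : \sum_(j < k | edge A j k) w j k * nth 0 (node_outputs A w b x k) j
   = \sum_(j < k | edge A j k) w j k * nv A w b x j by [].
by apply: eq_bigr => j _; rewrite nth_no.
Qed.

Lemma out_pre (R : realType) d (A : architecture d) (w : nat -> nat -> R) (b : nat -> R) (x : 'I_d -> R) :
  network_output A w b x = pre A w b x (nnodes A).-1.
Proof.
have h := output_noninput A.
rewrite /network_output nth_no; last by rewrite prednK // (leq_ltn_trans _ h).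
by rewrite nv_hidden ?eqxx // -ltnS prednK // (leq_ltn_trans _ h).
Qed.



Definition cf d (A : architecture d) (R : realType) (w : nat -> nat -> R) (i k : nat) : R :=
  if edge A i k then w i k else 0.

Lemma pre_diff (R : realType) d (A : architecture d) (w : nat -> nat -> R) (b : nat -> R)
  (x y : 'I_d -> R) k : (2 <= d)%N -> (d <= k)%N ->
  (forall i : 'I_d, (2 <= i)%N -> x i = 0 /\ y i = 0) ->
  (forall j, (d <= j < k)%N -> nv A w b x j = nv A w b y j) ->
  pre A w b x k - pre A w b y k =
   cf A w 0 k * (nv A w b x 0 - nv A w b y 0) + cf A w 1 k * (nv A w b x 1 - nv A w b y 1).
Proof.
move=> hd hk hsl hh.
rewrite /pre opprD addrACA subrr addr0 -sumrB.
under eq_bigr => j _ do rewrite -mulrBr.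
rewrite big_mkcond /=.
have hk2 : (2 <= k)%N by apply: leq_trans hk.
have -> : k = (k - 2).+2 by rewrite -addn2 subnK.
rewrite 2!big_ord_recl /= big1 ?addr0.
  by rewrite /cf; case: (edge A 0 _); case: (edge A 1 _); rewrite ?mul0r.
move=> j _; case: ifP => // _.
rewrite /bump /=.
rewrite -(addn2 (k-2)) subnK // add1n add1n.
case: (ltnP j.+2 d) => hj.
  rewrite !nv_input; have [-> ->] := hsl (Ordinal hj) isT; by rewrite subrr mulr0.
rewrite hh ?subrr ?mulr0 // hj /=.
have := ltn_ord j; rewrite ltn_subRL addnC addn2 //.
Qed.



Definition co d (R : realType) (x : 'I_d -> R) (j : nat) : R :=
  if insub j is Some i then x i else 0.
Definition mk d (R : realType) (a1 a2 : R) : 'I_d -> R :=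
  fun i => if (i : nat) == 0%N then a1 else if (i : nat) == 1%N then a2 else 0.

Lemma co_nv (R : realType) d (A : architecture d) (w : nat -> nat -> R) (b : nat -> R)
  (x : 'I_d -> R) j : (j < d)%N -> nv A w b x j = co x j.
Proof. by move=> hj; rewrite nv_input /co insubT. Qed.

Lemma co_mk0 d (R : realType) (a1 a2 : R) : (0 < d)%N -> co (@mk d R a1 a2) 0 = a1.
Proof. by move=> h; rewrite /co insubT /mk /=. Qed.
Lemma co_mk1 d (R : realType) (a1 a2 : R) : (1 < d)%N -> co (@mk d R a1 a2) 1 = a2.
Proof. by move=> h; rewrite /co insubT /mk /=. Qed.
Lemma mk_slice d (R : realType) (a1 a2 : R) (i : 'I_d) : (2 <= i)%N -> @mk d R a1 a2 i = 0.
Proof. by rewrite /mk; case: i => [[|[|i]] ?]. Qed.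

Lemma heav_keep (R : realType) (q r : R) : `|r| < `|q| -> heaviside (q + r) = heaviside q.
Proof.
rewrite /heaviside; case: (lerP 0 q) => hq; rewrite ltr_norml.
  by rewrite ger0_norm // => /andP [h1 h2]; rewrite ifT //; lra.
by rewrite ltr0_norm // => /andP [h1 h2]; rewrite ifF //; apply/negbTE; rewrite -ltNge; lra.
Qed.

Definition inbox d (R : realType) (p0 del : R) (x : 'I_d -> R) :=
  (forall i : 'I_d, (2 <= i)%N -> x i = 0) /\ (p0 - del < co x 0 < p0 + del) /\
  ((1 - p0)^+2 - del < co x 1 < (1 - p0)^+2 + del).

Lemma inbox_mk d (R : realType) (p0 del : R) : (1 < d)%N -> 0 < del ->
  inbox p0 del (@mk d R p0 ((1 - p0)^+2)).
Proof.
move=> hd hdel; split; first exact: mk_slice.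
rewrite co_mk0 ?co_mk1 //; last by apply: ltn_trans hd.
split; apply/andP; split; lra.
Qed.

Lemma inbox_sub d (R : realType) (p0 del t del' : R) (x : 'I_d -> R) :
  0 < p0 -> p0 <= t -> t <= p0 + 3 * del / 16 -> t < 1 -> 0 < del -> del' <= del / 2 ->
  inbox t del' x -> inbox p0 del x.
Proof.
move=> h1 h2 h3 h4 h5 h6 [hs [/andP [a1 a2] /andP [b1 b2]]]; split => //.
split; apply/andP; split; try lra.
  have : (1 - t)^+2 <= (1 - p0)^+2 by rewrite !expr2; nra.
  have : (1 - p0)^+2 - (1 - t)^+2 <= 2 * (t - p0) by rewrite !expr2; nra.
  lra.
have : (1 - t)^+2 <= (1 - p0)^+2 by rewrite !expr2; nra.
lra.
Qed.



Definition Inv (R : realType) d (A : architecture d) (w : nat -> nat -> R) (b : nat -> R) k :=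
  exists p0 del : R, (0 < p0 < 1) /\ 0 < del /\ forall x, inbox p0 del x ->
    forall j, (d <= j < k)%N -> nv A w b x j = nv A w b (@mk d R p0 ((1 - p0)^+2)) j.

Lemma Inv_diff (R : realType) d (A : architecture d) (w : nat -> nat -> R) (b : nat -> R) k p0 del :
  (2 <= d)%N -> (d <= k)%N ->
  (forall x, inbox p0 del x ->
    forall j, (d <= j < k)%N -> nv A w b x j = nv A w b (@mk d R p0 ((1 - p0)^+2)) j) ->
  forall x y, inbox p0 del x -> inbox p0 del y ->
  pre A w b x k - pre A w b y k = cf A w 0 k * (co x 0 - co y 0) + cf A w 1 k * (co x 1 - co y 1).
Proof.
move=> hd hk hI x y hx hy.
rewrite pre_diff //; last by move=> j hj; rewrite !hI.
  by rewrite !co_nv //; apply: ltn_trans hd.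
by move=> i hi; split; [apply: hx.1 | apply: hy.1].
Qed.

Lemma Inv_start (R : realType) d (A : architecture d) (w : nat -> nat -> R) (b : nat -> R) :
  Inv A w b d.
Proof.
exists (2^-1), 1; split; first by apply/andP; split; lra.
split => // x _ j /andP [h1 h2]; by move: (leq_ltn_trans h1 h2); rewrite ltnn.
Qed.



Lemma bound_lin (R : realType) (c0 c1 e0 e1 del q : R) :
  `|e0| < del -> `|e1| < del -> del * (`|c0| + `|c1| + 1) <= `|q| ->
  `|c0 * e0 + c1 * e1| < `|q|.
Proof.
move=> h0 h1 h.
apply: (le_lt_trans (ler_normD _ _)); rewrite !normrM.
have a0 : `|c0| * `|e0| <= `|c0| * del by rewrite ler_wpM2l // ltW.
have a1 : `|c1| * `|e1| <= `|c1| * del by rewrite ler_wpM2l // ltW.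
have : 0 < del by apply: le_lt_trans h0.
lra.
Qed.

Lemma Inv_step (R : realType) d (A : architecture d) (w : nat -> nat -> R) (b : nat -> R) k :
  (2 <= d)%N -> (d <= k)%N -> (k < (nnodes A).-1)%N -> Inv A w b k -> Inv A w b k.+1.
Proof.
move=> hd hk hkN [p0 [del [/andP [hp0 hp1] [hdel hI]]]].
have hD := Inv_diff hd hk hI.
have hnvk : forall z, nv A w b z k = heaviside (pre A w b z k).
  by move=> z; rewrite nv_hidden // (ltn_eqF hkN).
have hd0 : (0 < d)%N by apply: ltn_trans hd.
have hPb : inbox p0 del (@mk d R p0 ((1 - p0)^+2)) by exact: inbox_mk.
case: (boolP ((cf A w 0 k == 0) && (cf A w 1 k == 0))) => [/andP [/eqP e0 /eqP e1] | hc].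
  exists p0, del; split; first by apply/andP.
  split => // x hx j /andP [hj1 hj2].
  rewrite ltnS leq_eqVlt in hj2; case/orP: hj2 => [/eqP -> | hj2]; last by apply: hI => //; apply/andP.
  rewrite !hnvk; congr heaviside; apply/eqP; rewrite -subr_eq0 hD // e0 e1.
  by rewrite !mul0r addr0.
pose eta := Order.min del (1 - p0) / 16.
have heta0 : 0 < eta by rewrite /eta divr_gt0 // lt_min hdel /=; lra.
have heta1 : eta <= del / 16 by rewrite /eta ler_pM2r ?ge_min ?lexx //; lra.
have heta2 : eta <= (1 - p0) / 16 by rewrite /eta ler_pM2r ?ge_min ?lexx ?orbT //; lra.
pose pt (t : R) := @mk d R t ((1 - t)^+2).
have hptb : forall t, p0 <= t -> t <= p0 + 3 * eta -> inbox p0 del (pt t).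
  move=> t ht1 ht2; apply: (@inbox_sub d R p0 del t (del / 2)) => //; try lra.
  by apply: inbox_mk => //; lra.
have hQ : forall t, p0 <= t -> t <= p0 + 3 * eta ->
   pre A w b (pt t) k = pre A w b (@mk d R p0 ((1 - p0)^+2)) k
     + cf A w 0 k * (t - p0) + cf A w 1 k * ((1 - t)^+2 - (1 - p0)^+2).
  move=> t ht1 ht2; have := hD (pt t) _ (hptb t ht1 ht2) hPb.
  rewrite /pt !co_mk0 // !co_mk1 // => h; lra.
have [t [ht1 ht2 hqt]] : exists t, [/\ p0 <= t, t <= p0 + 3 * eta & pre A w b (pt t) k != 0].
  case: (boolP (pre A w b (pt (p0 + eta)) k == 0)) => [/eqP z1|]; last first.
    by move=> h; exists (p0 + eta); split => //; lra.
  case: (boolP (pre A w b (pt (p0 + 2 * eta)) k == 0)) => [/eqP z2|]; last first.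
    by move=> h; exists (p0 + 2 * eta); split => //; lra.
  case: (boolP (pre A w b (pt (p0 + 3 * eta)) k == 0)) => [/eqP z3|]; last first.
    by move=> h; exists (p0 + 3 * eta); split => //; lra.
  exfalso; move: hc.
  rewrite hQ in z1; try lra. rewrite hQ in z2; try lra. rewrite hQ in z3; try lra.
  set C := pre A w b _ k in z1 z2 z3.
  set a := cf A w 0 k in z1 z2 z3 *; set c := cf A w 1 k in z1 z2 z3 *.
  have E1 : c * eta ^+ 2 = 0 by lra.
  have c0 : c = 0.
    by move/eqP: E1; rewrite mulf_eq0 expf_eq0 /= (gt_eqF heta0) orbF => /eqP.
  rewrite c0 in z1 z2.
  have E2 : a * eta = 0 by lra.
  have a0 : a = 0.
    by move/eqP: E2; rewrite mulf_eq0 (gt_eqF heta0) orbF => /eqP.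
  by rewrite a0 c0 eqxx.
set q := pre A w b (pt t) k.
set S := `|cf A w 0 k| + `|cf A w 1 k| + 1.
have hS : 0 < S by rewrite /S; apply: ltr_wpDl; [apply: addr_ge0 | exact: ltr01].
have hq0 : 0 < `|q| by rewrite normr_gt0.
pose del' := Order.min (del / 2) (`|q| / S).
have hd'0 : 0 < del' by rewrite /del' lt_min; apply/andP; split; [lra | exact: divr_gt0].
have hd'1 : del' <= del / 2 by rewrite /del' ge_min lexx.
have hd'2 : del' * S <= `|q|.
  by rewrite -ler_pdivlMr // /del' ge_min lexx orbT.
have ht3 : t < 1 by lra.
exists t, del'; split; first by apply/andP; split; lra.
split => // x hx j /andP [hj1 hj2].
have hxb : inbox p0 del x.
  by apply: (@inbox_sub d R p0 del t del') => //; lra.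
have hptt : inbox p0 del (pt t) by apply: hptb.
rewrite ltnS leq_eqVlt in hj2; case/orP: hj2 => [/eqP -> | hj2]; last first.
  by rewrite hI ?hj1 // -(hI (pt t)) ?hj1.
rewrite !hnvk; fold q.
have -> : pre A w b x k = q + (cf A w 0 k * (co x 0 - t) + cf A w 1 k * (co x 1 - (1 - t)^+2)).
  by have := hD x (pt t) hxb hptt; rewrite /pt co_mk0 // co_mk1 // -/q => h; lra.
apply: heav_keep; apply: (bound_lin _ _ hd'2).
  by move: hx => [_ [/andP [u1 u2] _]]; rewrite ltr_norml; apply/andP; split; lra.
by move: hx => [_ [_ /andP [u1 u2]]]; rewrite ltr_norml; apply/andP; split; lra.
Qed.



Lemma Inv_out (R : realType) d (A : architecture d) (w : nat -> nat -> R) (b : nat -> R) :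
  (2 <= d)%N -> Inv A w b (nnodes A).-1.
Proof.
move=> hd; have hN : (d <= (nnodes A).-1)%N by rewrite -ltnS prednK ?output_noninput //;
  apply: leq_ltn_trans (output_noninput A).
suff : forall m, (d + m <= (nnodes A).-1)%N -> Inv A w b (d + m).
  by move/(_ ((nnodes A).-1 - d)%N); rewrite subnKC //; apply.
elim=> [|m IH hm]; first by rewrite addn0 => _; exact: Inv_start.
rewrite addnS in hm *; apply: Inv_step => //; first by rewrite leq_addr.
by apply: IH; apply: ltnW.
Qed.

Lemma pos_min2 (R : realType) (a c : R) : 0 < a -> 0 < c -> exists u, [/\ 0 < u, u <= a & u <= c].
Proof.
move=> ha hc; exists (Order.min a c); split; first by rewrite lt_min ha.
  by rewrite ge_min lexx.
by rewrite ge_min lexx orbT.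
Qed.

Lemma cube_mk d (R : realType) (a1 a2 : R) : 0 <= a1 <= 1 -> 0 <= a2 <= 1 -> cube (@mk d R a1 a2).
Proof.
move=> h1 h2 i; rewrite /mk; case: ifP => // _; case: ifP => // _.
by rewrite lexx ler01.
Qed.

Lemma co_le d (R : realType) (x y : 'I_d -> R) j : (forall i, x i <= y i) -> co x j <= co y j.
Proof. by rewrite /co; case: (insub j) => [i|] // h. Qed.

Lemma co_cube d (R : realType) (x : 'I_d -> R) j : cube x -> 0 <= co x j <= 1.
Proof. by rewrite /co; case: (insub j) => [i|] // h; rewrite lexx ler01. Qed.

Definition fstep d (R : realType) (x : 'I_d -> R) : R :=
  if (1 - co x 0)^+2 <= co x 1 then 1 else 0.

Lemma fstep_mono d (R : realType) : monotone_cube (@fstep d R).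
Proof.
split.
  by move=> x _; rewrite /fstep; case: ifP; rewrite lexx ler01.
move=> x y hx hy hxy; rewrite /fstep; case: ifP => h; last by case: ifP; rewrite ?lexx ?ler01.
rewrite ifT // .
have := co_le 0 hxy; have := co_le 1 hxy; have := co_cube 0 hy; have := co_cube 0 hx.
move=> /andP [a1 a2] /andP [b1 b2] c1 c2.
have : (1 - co y 0) ^+ 2 <= (1 - co x 0) ^+ 2 by rewrite !expr2; nra.
lra.
Qed.

Lemma main_real (R : realType) d (A : architecture d) (w : nat -> nat -> R) (b : nat -> R) (e : R) :
  (2 <= d)%N -> 0 < e -> exists x, cube x /\
    2^-1 - e <= `|fstep x - network_output A w b x|.
Proof.
move=> hd he.
have hd0 : (0 < d)%N by apply: ltn_trans hd.
have hN : (d <= (nnodes A).-1)%N by rewrite -ltnS prednK ?output_noninput //;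
  apply: leq_ltn_trans (output_noninput A).
have [p0 [del [/andP [hp0 hp1] [hdel hI]]]] := Inv_out A w b hd.
have hD := Inv_diff hd hN hI.
set a0 := cf A w 0 (nnodes A).-1; set a1 := cf A w 1 (nnodes A).-1.
set S := `|a0| + `|a1| + 1.
have hS : 0 < S by rewrite /S; apply: ltr_wpDl; [apply: addr_ge0 | exact: ltr01].
have hq : 0 < 1 - p0 by lra.
have hq2 : 0 < (1 - p0)^+2 by rewrite exprn_gt0.
have hq3 : 0 < 1 - (1 - p0)^+2 by rewrite expr2; nra.
have [u1 [hu1 hu1a hu1b]] := pos_min2 (divr_gt0 hdel (ltr0Sn _ 1)) (divr_gt0 hp0 (ltr0Sn _ 1)).
have [u2 [hu2 hu2a hu2b]] := pos_min2 (divr_gt0 hq (ltr0Sn _ 1)) (divr_gt0 hq2 (ltr0Sn _ 1)).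
have [u3 [hu3 hu3a hu3b]] := pos_min2 (divr_gt0 hq3 (ltr0Sn _ 1)) (divr_gt0 he hS).
have [u4 [hu4 hu4a hu4b]] := pos_min2 hu1 hu2.
have [u [hu hua hub]] := pos_min2 hu4 hu3.
have huS : u * S <= e by rewrite -ler_pdivlMr //; apply: le_trans hub hu3b.
have h2 : (2 : R) = 1 + 1 by [].
have hua' : u <= del / 2 /\ u <= p0 / 2 /\ u <= (1 - p0) / 2 /\ u <= (1 - p0)^+2 / 2 /\
   u <= (1 - (1 - p0)^+2) / 2.
  repeat split; lra.
move: hua' => [v1 [v2 [v3 [v4 v5]]]].
pose x := @mk d R (p0 + u) ((1 - p0)^+2 + u).
pose y := @mk d R (p0 - u) ((1 - p0)^+2 - u).
have hx : inbox p0 del x.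
  split; first exact: mk_slice.
  by rewrite co_mk0 // co_mk1 //; split; apply/andP; split; lra.
have hy : inbox p0 del y.
  split; first exact: mk_slice.
  by rewrite co_mk0 // co_mk1 //; split; apply/andP; split; lra.
have hcx : cube x by apply: cube_mk; apply/andP; split; lra.
have hcy : cube y by apply: cube_mk; apply/andP; split; lra.
have fx : fstep x = 1.
  rewrite /fstep co_mk0 // co_mk1 // ifT //.
  have : u * u <= 2 * u * (1 - p0) by nra.
  rewrite !expr2; lra.
have fy : fstep y = 0.
  rewrite /fstep co_mk0 // co_mk1 // ifF //; apply/negbTE; rewrite -ltNge.
  have : 0 <= u * u by nra.
  rewrite !expr2; nra.
have hg := hD x y hx hy; rewrite /x /y !co_mk0 // !co_mk1 // -/a0 -/a1 in hg.
have hb : `|a0 * (p0 + u - (p0 - u)) + a1 * ((1 - p0) ^+ 2 + u - ((1 - p0) ^+ 2 - u))| <= 2 * e.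
  apply: (le_trans (ler_normD _ _)); rewrite !normrM.
  have -> : `|p0 + u - (p0 - u)| = 2 * u by rewrite ger0_norm; lra.
  have -> : `|(1 - p0) ^+ 2 + u - ((1 - p0) ^+ 2 - u)| = 2 * u by rewrite ger0_norm; lra.
  move: huS; rewrite /S; lra.
rewrite -hg in hb; move: hb; rewrite ler_norml => /andP [b1 b2].
case: (lerP (2^-1 - e) `|fstep x - network_output A w b x|) => h.
  by exists x.
exists y; split => //.
move: h; rewrite !out_pre fx fy ltr_norml => /andP [c1 c2].
rewrite sub0r normrN; apply: le_trans (ler_norm _); lra.
Qed.



Theorem proposition4 (R : realType) (d : nat) (hd : (2 <= d)%N)
  (A : architecture d) :
  (((2%:R)^-1 : R)%:E <=
  ereal_sup [set ereal_inf [set supnorm_cube f g | g in @H_A R d A]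
            | f in @monotone_cube R d])%E.
Proof.
have H1 : (((2%:R)^-1 : R)%:E <= ereal_inf [set supnorm_cube (@fstep d R) g | g in @H_A R d A])%E.
  apply/ereal_infP => _ [g [w [b ->]] <-].
  apply/lee_addgt0Pr => e he.
  have [x [hx hxe]] := main_real A w b hd he.
  apply: (@le_trans _ _ ((`|fstep x - network_output A w b x|)%:E + e%:E)%E).
    by rewrite -EFinD lee_fin; lra.
  apply: leeD2r; apply: ereal_sup_ubound; by exists x.
apply: le_trans H1 _; apply: ereal_sup_ubound; exists (@fstep d R) => //.
exact: fstep_mono.
Qed.
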